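(* Let $R_1$ and $R_2$ be commutative rings with nonzero identity, let $I_1$ be a proper ideal of $R_1$ and $I_2$ a proper ideal of $R_2$, and put $R=R_1\times R_2$ and $I=I_1\times I_2$. Then the graph $\Gamma''_{I}(R)$ is connected and $\operatorname{diam}(\Gamma''_{I}(R))\leq 3$.
   Context: All rings are commutative with nonzero identity; $R_1\times R_2$ has componentwise operations and $I_1\times I_2$ is an ideal of it. For a ring $R$ and an ideal $I$ of $R$, $\Gamma''_I(R)$ is the simple undirected graph whose vertex set is $\{x\in R\setminus I : xR+I\neq R\}$, and two distinct vertices $x,y$ are adjacent if and only if $x\notin yR+I$ and $y\notin xR+I$. A graph is connected if any two distinct vertices are joined by a path; the diameter is the supremum of the distances (lengths of shortest paths) between vertices. *)

(* Defs.v *)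
From mathcomp Require Import all_boot all_algebra.
Set Implicit Arguments. Unset Strict Implicit. Unset Printing Implicit Defensive.
Import GRing.Theory.
Local Open Scope ring_scope.

Record is_ideal (R : comNzRingType) (I : R -> Prop) : Prop := {
  ideal0 : I 0;
  idealD : forall x y, I x -> I y -> I (x + y);
  idealM : forall r x, I x -> I (r * x) }.

Definition is_proper_ideal (R : comNzRingType) (I : R -> Prop) : Prop :=
  is_ideal I /\ exists z, ~ I z.

Definition prod_ring (R1 R2 : comNzRingType) : comNzRingType := (R1 * R2)%type.

Definition prod_ideal (R1 R2 : comNzRingType) (I1 : R1 -> Prop) (I2 : R2 -> Prop)
  : prod_ring R1 R2 -> Prop := fun p => I1 p.1 /\ I2 p.2.

Definition in_xR_plus (R : comNzRingType) (I : R -> Prop) (x z : R) : Prop :=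
  exists r i, I i /\ z = x * r + i.

(* vertex set of Gamma''_I(R): x \notin I and xR + I <> R *)
Definition G2_vertex (R : comNzRingType) (I : R -> Prop) (x : R) : Prop :=
  ~ I x /\ ~ (forall z, in_xR_plus I x z).

Definition G2_adj (R : comNzRingType) (I : R -> Prop) (x y : R) : Prop :=
  G2_vertex I x /\ G2_vertex I y /\ x <> y /\
  ~ in_xR_plus I y x /\ ~ in_xR_plus I x y.

Fixpoint walk (T : Type) (adj : T -> T -> Prop) (n : nat) (x y : T) : Prop :=
  match n with
  | O => x = y
  | S n => exists z, adj x z /\ walk adj n z y
  end.

Definition graph_connected (T : Type) (V : T -> Prop) (adj : T -> T -> Prop) :=
  forall x y, V x -> V y -> x <> y -> exists n, walk adj n x y.

Definition diam_le (T : Type) (V : T -> Prop) (adj : T -> T -> Prop) (d : nat) :=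
  forall x y, V x -> V y -> exists n, (n <= d)%N /\ walk adj n x y.

(* Main.v *)
Require Import Defs.
From mathcomp Require Import all_boot all_algebra.
From Stdlib Require Import Classical.
Import GRing.Theory.

Section S.
Local Open Scope ring_scope.

Lemma full_of_one (R : comNzRingType) (I : R -> Prop) (a : R) :
  is_ideal I -> in_xR_plus I a 1 -> forall z, in_xR_plus I a z.
Proof.
move=> HI [r [i [Hi E]]] z; exists (r * z), (z * i); split.
  by apply: (idealM HI).
by rewrite -[LHS]mul1r E mulrDl mulrA [z * i]mulrC.
Qed.

Lemma not_full_of_ideal (R : comNzRingType) (I : R -> Prop) (a : R) :
  is_proper_ideal I -> I a -> ~ (forall z, in_xR_plus I a z).
Proof.
move=> [HI [z Hz]] Ha H; apply: Hz; have [r [i [Hi ->]]] := H z.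
apply: (idealD HI) => //; rewrite mulrC; exact: (idealM HI).
Qed.

Lemma one_notin (R : comNzRingType) (I : R -> Prop) :
  is_proper_ideal I -> ~ I 1.
Proof.
move=> [HI [z Hz]] H1; apply: Hz; rewrite -[z]mulr1; exact: (idealM HI).
Qed.

Arguments full_of_one {R I a}.
Arguments not_full_of_ideal {R I a}.
Arguments one_notin {R I}.

Variables (R1 R2 : comNzRingType) (I1 : R1 -> Prop) (I2 : R2 -> Prop).
Hypotheses (H1 : is_proper_ideal I1) (H2 : is_proper_ideal I2).
Let P := prod_ideal I1 I2.

Lemma in_prod {x z : prod_ring R1 R2} :
  in_xR_plus P x z -> in_xR_plus I1 x.1 z.1 /\ in_xR_plus I2 x.2 z.2.
Proof.
move=> [r [i [[Hi1 Hi2] E]]]; split.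
  by exists r.1, i.1; split => //; rewrite E.
by exists r.2, i.2; split => //; rewrite E.
Qed.

Lemma in_prod2 {x z : prod_ring R1 R2} :
  in_xR_plus I1 x.1 z.1 -> in_xR_plus I2 x.2 z.2 -> in_xR_plus P x z.
Proof.
move=> [r1 [i1 [Hi1 E1]]] [r2 [i2 [Hi2 E2]]].
exists ((r1, r2) : prod_ring R1 R2), ((i1, i2) : prod_ring R1 R2); split.
  by split.
case: x z E1 E2 => a b [c d] /= -> ->; reflexivity.
Qed.

Definition u : prod_ring R1 R2 := (1, 0).
Definition v : prod_ring R1 R2 := (0, 1).

Lemma adj_sym {x y : prod_ring R1 R2} : G2_adj P x y -> G2_adj P y x.
Proof. by move=> [a [b [c [d e]]]]; split=> //; split=> //; split=> //; auto. Qed.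

Lemma v_vertex : G2_vertex P v.
Proof.
split.
  move=> [_ B]; rewrite /v /= in B. exact: (one_notin H2 B).
move=> H; have [_ [z1 Hz1]] := H1.
have [Hc _] := in_prod (H ((z1, 0) : prod_ring R1 R2)).
have [r [i [Hi E]]] := Hc; apply: Hz1; rewrite /= in E; rewrite E mul0r add0r //.
Qed.

Lemma u_vertex : G2_vertex P u.
Proof.
split.
  by move=> [A _]; exact: (one_notin H1 A).
move=> H; have [_ [z2 Hz2]] := H2.
have [_ Hc] := in_prod (H ((0, z2) : prod_ring R1 R2)).
have [r [i [Hi E]]] := Hc; apply: Hz2; rewrite /= in E; rewrite E mul0r add0r //.
Qed.

Lemma adjA (x : prod_ring R1 R2) : G2_vertex P x -> ~ I1 x.1 ->
  ~ (forall z, in_xR_plus I2 x.2 z) -> G2_adj P x v.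
Proof.
move=> Hx Ha Hb; split=> //; split; first exact: v_vertex.
split; first by move=> E; apply: Ha; rewrite E; exact: (ideal0 H1.1).
split.
  move=> /in_prod [[r [i [Hi E]]] _]; apply: Ha; rewrite E /= mul0r add0r //.
move=> /in_prod [_ Hc]; apply: Hb; apply: full_of_one => //; exact: H2.1.
Qed.

Lemma adjB (x : prod_ring R1 R2) : G2_vertex P x -> ~ I2 x.2 ->
  ~ (forall z, in_xR_plus I1 x.1 z) -> G2_adj P x u.
Proof.
move=> Hx Ha Hb; split=> //; split; first exact: u_vertex.
split; first by move=> E; apply: Ha; rewrite E; exact: (ideal0 H2.1).
split.
  move=> /in_prod [_ [r [i [Hi E]]]]; apply: Ha; rewrite E /= mul0r add0r //.
move=> /in_prod [Hc _]; apply: Hb; apply: full_of_one => //; exact: H1.1.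
Qed.

Lemma adj_uv : G2_adj P u v.
Proof.
apply: adjA; first exact: u_vertex.
  exact: (one_notin H1).
exact: (not_full_of_ideal H2 (ideal0 H2.1)).
Qed.

Lemma every {x : prod_ring R1 R2} : G2_vertex P x -> G2_adj P x u \/ G2_adj P x v.
Proof.
move=> Hx; have [Hn Hf] := Hx.
have [F1 | F1] := classic (forall z, in_xR_plus I1 x.1 z).
  have [F2 | F2] := classic (forall z, in_xR_plus I2 x.2 z).
    by exfalso; apply: Hf => z; apply: in_prod2.
  right; apply: adjA => // A; apply: (not_full_of_ideal H1 A F1).
have [B | B] := classic (I2 x.2).
  right; apply: adjA => //; last exact: (not_full_of_ideal H2 B).
  by move=> A; apply: Hn.
by left; apply: adjB.
Qed.

Lemma diam3 : diam_le (G2_vertex P) (G2_adj P) 3.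
Proof.
move=> x y Hx Hy.
have adj_vu := adj_sym adj_uv.
have w2 : forall a b c, G2_adj P a b -> G2_adj P b c -> walk (G2_adj P) 2 a c.
  by move=> a b c Ab Bc; exists b; split => //; exists c; split.
have w3 : forall a b c d, G2_adj P a b -> G2_adj P b c -> G2_adj P c d ->
    walk (G2_adj P) 3 a d.
  by move=> a b c d Ab Bc Cd; exists b; split => //; exists c; split => //; exists d.
case: (every Hx) => Ax; case: (every Hy) => Ay.
- by exists 2%N; split => //; apply: w2 Ax (adj_sym Ay).
- by exists 3%N; split => //; apply: w3 Ax adj_uv (adj_sym Ay).
- by exists 3%N; split => //; apply: w3 Ax adj_vu (adj_sym Ay).
- by exists 2%N; split => //; apply: w2 Ax (adj_sym Ay).
Qed.

End S.

Theorem theorem2p9 (R1 R2 : comNzRingType) (I1 : R1 -> Prop) (I2 : R2 -> Prop) :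
  is_proper_ideal I1 -> is_proper_ideal I2 ->
  graph_connected (G2_vertex (prod_ideal I1 I2)) (G2_adj (prod_ideal I1 I2)) /\
  diam_le (G2_vertex (prod_ideal I1 I2)) (G2_adj (prod_ideal I1 I2)) 3.
Proof.
move=> H1 H2; have D := @diam3 _ _ _ _ H1 H2; split => // x y Hx Hy _.
by have [n [_ W]] := D x y Hx Hy; exists n.
Qed.
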